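(* Let $i,m\in\mathbb{N}$ with $i\ge1$, let $v\in\mathbb{R}^i$ and $\omega_0\in\mathbb{R}^n$. Then either there exists $k_0\ge i$ such that $CB^mQ_i^k(v)\omega_0\neq0$ for all $k\ge k_0$, or $CB^mQ_i^k(v)\omega_0=0$ for all $k\ge i$.
   Context: Let $n\ge1$, $A,B\in\mathrm{End}(\mathbb{R}^n)$, $C\in\mathcal{L}(\mathbb{R}^n,\mathbb{R})$. Polynomials have commuting scalar indeterminates $X_0,X_1,\dots$ and coefficients in $\mathrm{End}(\mathbb{R}^n)$. Define the linear map $\Psi$ by $\Psi(P)(X_0,\dots,X_k)=P(X_0,\dots,X_{k-1})(A+X_0B)+\sum_{i=0}^{k-1}\frac{\partial P}{\partial X_i}(X_0,\dots,X_{k-1})X_{i+1}$, where $k$ is the least $\ell$ such that $P$ involves only $X_0,\dots,X_{\ell-1}$. Let $P_0=I$, $P_{k+1}=\Psi(P_k)$, and for $1\le i\le k$ let $Q_i^k=\partial P_k/\partial X_{k-i}$. Each $Q_i^k$ ($k\ge i$) is a polynomial in $X_0,\dots,X_{i-1}$ only, and $Q_i^k(v)$ denotes its evaluation at $(X_0,\dots,X_{i-1})=v$. *)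

(* Defs.v *)
From mathcomp Require Import all_boot all_algebra.
From mathcomp Require Import reals.
Set Implicit Arguments. Unset Strict Implicit. Unset Printing Implicit Defensive.
Import GRing.Theory.
Local Open Scope ring_scope.

(* Polynomials in the commuting scalar indeterminates X_0, X_1, ... with
   coefficients in End(R^n) = 'M[R]_n, represented as formal finite sums of
   terms (c, s) meaning  c * X_0^(s_0) X_1^(s_1) ...  (s : seq nat, missing
   exponents are 0).  All operations below are defined termwise and are
   compatible with the polynomial they represent; the statement only uses
   evaluations, which do not depend on the representative. *)

Section Polys.
Variables (R : realType) (n : nat).

Definition mono := seq nat.
Definition mpol := seq ('M[R]_n * mono).

(* P(X) * (A + X_0 B) *)
Definition mulAB (A B : 'M[R]_n) (P : mpol) : mpol :=
  flatten [seq [:: (t.1 *m A, t.2); (t.1 *m B, incr_nth t.2 0)] | t <- P].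

Definition pderiv (j : nat) (P : mpol) : mpol :=
  [seq ((nth 0%N t.2 j)%:R *: t.1, set_nth 0%N t.2 j (nth 0%N t.2 j).-1)
  | t <- P & nth 0%N t.2 j != 0%N].

Definition mulX (j : nat) (P : mpol) : mpol :=
  [seq (t.1, incr_nth t.2 j) | t <- P].

(* Psi(P) = P (A + X_0 B) + sum_{i<k} dP/dX_i * X_{i+1}, with k given
   (P involves only X_0..X_{k-1}) *)
Definition Psi (A B : 'M[R]_n) (k : nat) (P : mpol) : mpol :=
  mulAB A B P ++ flatten [seq mulX j.+1 (pderiv j P) | j <- iota 0 k].

Fixpoint Pk (A B : 'M[R]_n) (k : nat) : mpol :=
  if k is k'.+1 then Psi A B k' (Pk A B k') else [:: (1%:M, [::])].

Definition Qik (A B : 'M[R]_n) (i k : nat) : mpol := pderiv (k - i) (Pk A B k).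

Definition mono_eval (e : nat -> R) (s : mono) : R :=
  \prod_(j < size s) e j ^+ nth 0%N s j.

Definition peval (e : nat -> R) (P : mpol) : 'M[R]_n :=
  \sum_(t <- P) mono_eval e t.2 *: t.1.

(* valuation X_j := v_j for j < i (and 0 for j >= i, irrelevant for Q_i^k) *)
Definition env_of (i : nat) (v : 'rV[R]_i) (j : nat) : R :=
  match (insub j : option 'I_i) with Some l => v ord0 l | None => 0 end.

Definition mxpow (B : 'M[R]_n) (m : nat) : 'M[R]_n := iter m (mulmx B) 1%:M.

End Polys.

(* Main.v *)
Require Import Defs.
From mathcomp Require Import all_boot all_order all_algebra.
From mathcomp Require Import reals.
From Stdlib Require Import Classical_Prop.
Set Implicit Arguments. Unset Strict Implicit. Unset Printing Implicit Defensive.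
Import Order.TTheory GRing.Theory Num.Theory.
Local Open Scope ring_scope.

Section Work.
Variables (R : realType) (n : nat).
Local Notation M := 'M[R]_n.
Local Notation mp := (mpol R n).

Definition meq (s s' : seq nat) : bool :=
  all (fun j => nth 0%N s j == nth 0%N s' j) (iota 0 (maxn (size s) (size s'))).

Lemma meqP s s' : reflect (forall j, nth 0%N s j = nth 0%N s' j) (meq s s').
Proof.
apply: (iffP allP) => [H j | H j _]; last by apply/eqP.
case: (ltnP j (maxn (size s) (size s'))) => hj.
  by apply/eqP; apply: H; rewrite mem_iota add0n hj.
rewrite geq_max in hj; case/andP: hj => h1 h2.
by rewrite !nth_default.
Qed.

Lemma meq_refl s : meq s s. Proof. by apply/meqP. Qed.
Lemma meq_sym s s' : meq s s' = meq s' s.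
Proof. by apply/meqP/meqP => H j. Qed.
Lemma meq_trans s1 s2 s3 : meq s1 s2 -> meq s2 s3 -> meq s1 s3.
Proof. by move=> /meqP H1 /meqP H2; apply/meqP => j; rewrite H1 H2. Qed.

Definition dec (s : seq nat) j := set_nth 0%N s j (nth 0%N s j).-1.

Lemma nth_dec s j l : nth 0%N (dec s j) l = if l == j then (nth 0%N s j).-1 else nth 0%N s l.
Proof. by rewrite /dec nth_set_nth. Qed.

Lemma meq_incr t s j : meq (incr_nth t j) s = (nth 0%N s j != 0%N) && meq t (dec s j).
Proof.
apply/meqP/andP.
  move=> H; split; first by rewrite -H nth_incr_nth eqxx.
  apply/meqP => l; rewrite nth_dec.
  have [->|hne] := eqVneq l j; first by rewrite -H nth_incr_nth eqxx.
  by rewrite -H nth_incr_nth eq_sym (negbTE hne).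
case=> h /meqP H l; rewrite nth_incr_nth H nth_dec.
have [->|hne] := eqVneq l j; first by rewrite ?eqxx ?add1n ?prednK ?lt0n.
by rewrite ?(negbTE hne) //.
Qed.

Lemma meq_dec t s j : nth 0%N t j != 0%N -> meq (dec t j) s = meq t (incr_nth s j).
Proof.
move=> tj; apply/meqP/meqP => H l; move: (H l); rewrite ?nth_dec ?nth_incr_nth.
  have [->|hne] := eqVneq l j; first by move=> <-; rewrite ?add1n ?prednK ?lt0n.
  by [].
have [->|hne] := eqVneq l j; first by move=> ->.
by [].
Qed.

Definition coef (P : mp) (s : seq nat) : M := \sum_(t <- P | meq t.2 s) t.1.
Definition eqv (P Q : mp) := forall s, coef P s = coef Q s.
Definition neg (P : mp) : mp := [seq (- t.1, t.2) | t <- P].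

Lemma coef_cons t P s : coef (t :: P) s = (if meq t.2 s then t.1 else 0) + coef P s.
Proof. by rewrite /coef big_cons; case: ifP => _; rewrite ?add0r. Qed.
Lemma coef_nil s : coef [::] s = 0. Proof. by rewrite /coef big_nil. Qed.
Lemma coef_cat P Q s : coef (P ++ Q) s = coef P s + coef Q s.
Proof. by rewrite /coef big_cat. Qed.
Lemma coef_neg P s : coef (neg P) s = - coef P s.
Proof.
elim: P => [|t P IH]; first by rewrite /= coef_nil oppr0.
by rewrite /= !coef_cons IH opprD; case: ifP => _; rewrite ?oppr0.
Qed.
Lemma coef_meq P s s' : meq s s' -> coef P s = coef P s'.
Proof.
move=> h; apply: eq_bigl => t; apply/idP/idP => h1.
  exact: meq_trans h1 h.
by apply: meq_trans h1 _; rewrite meq_sym.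
Qed.

Lemma coef_mulX j P s :
  coef (mulX j P) s = if nth 0%N s j != 0%N then coef P (dec s j) else 0.
Proof.
elim: P => [|t P IH]; first by rewrite /mulX /= !coef_nil; case: ifP.
rewrite /mulX /= -/(mulX j P) !coef_cons IH meq_incr.
by case: (nth 0%N s j != 0%N); case: (meq t.2 (dec s j)); rewrite /= ?add0r ?addr0.
Qed.

Lemma coef_pderiv j P s :
  coef (pderiv j P) s = (nth 0%N s j).+1%:R *: coef P (incr_nth s j).
Proof.
elim: P => [|t P IH]; first by rewrite /pderiv /= !coef_nil scaler0.
rewrite /pderiv /=; case: ifP => tj.
  rewrite /= -/(pderiv j P) !coef_cons IH scalerDr /=.
  rewrite -/(dec t.2 j) meq_dec //; case: ifP => [/meqP H|_]; last by rewrite scaler0.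
  by congr (_ + _); rewrite H nth_incr_nth eqxx.
change (coef (pderiv j P) s = (nth 0%N s j).+1%:R *: coef (t :: P) (incr_nth s j)); rewrite IH coef_cons.
case: ifP => [/meqP H|_]; last by rewrite add0r.
by move/negbT: tj; rewrite H nth_incr_nth eqxx.
Qed.

Lemma coef_mulAB A B P s :
  coef (mulAB A B P) s =
  coef P s *m A + (if nth 0%N s 0 != 0%N then coef P (dec s 0) *m B else 0).
Proof.
elim: P => [|t P IH]; first by rewrite /= !coef_nil mul0mx add0r; case: ifP; rewrite ?mul0mx.
rewrite /mulAB /= -/(mulAB A B P) !coef_cons IH meq_incr !mulmxDl.
case: (meq t.2 s); case: (nth 0%N s 0 != 0%N); case: (meq t.2 (dec s 0));
  rewrite /= ?mul0mx ?add0r ?addr0 ?addrA //.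
- by rewrite (addrAC (t.1 *m A)).
- by rewrite (addrC (t.1 *m B)).
Qed.


Lemma eqv_refl P : eqv P P. Proof. by []. Qed.
Lemma eqv_sym P Q : eqv P Q -> eqv Q P. Proof. by move=> h s; rewrite h. Qed.
Lemma eqv_trans P Q S : eqv P Q -> eqv Q S -> eqv P S.
Proof. by move=> h1 h2 s; rewrite h1 h2. Qed.
Lemma eqv_cat P P' Q Q' : eqv P P' -> eqv Q Q' -> eqv (P ++ Q) (P' ++ Q').
Proof. by move=> h1 h2 s; rewrite !coef_cat h1 h2. Qed.
Lemma eqv_neg P Q : eqv P Q -> eqv (neg P) (neg Q).
Proof. by move=> h s; rewrite !coef_neg h. Qed.
Lemma pderiv_eqv j P Q : eqv P Q -> eqv (pderiv j P) (pderiv j Q).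
Proof. by move=> h s; rewrite !coef_pderiv h. Qed.
Lemma mulX_eqv j P Q : eqv P Q -> eqv (mulX j P) (mulX j Q).
Proof. by move=> h s; rewrite !coef_mulX h. Qed.
Lemma mulAB_eqv A B P Q : eqv P Q -> eqv (mulAB A B P) (mulAB A B Q).
Proof. by move=> h s; rewrite !coef_mulAB !h. Qed.

Lemma coef_flatten (F : nat -> mp) l s :
  coef (flatten [seq F j | j <- l]) s = \sum_(j <- l) coef (F j) s.
Proof.
elim: l => [|j l IH]; first by rewrite big_nil coef_nil.
by rewrite /= coef_cat IH big_cons.
Qed.

Lemma coef_Psi A B K P s :
  coef (Psi A B K P) s =
  coef (mulAB A B P) s + \sum_(j <- iota 0 K) coef (mulX j.+1 (pderiv j P)) s.
Proof. by rewrite /Psi coef_cat coef_flatten. Qed.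

Lemma Psi_eqv A B K P Q : eqv P Q -> eqv (Psi A B K P) (Psi A B K Q).
Proof.
move=> h s; rewrite !coef_Psi (mulAB_eqv A B h); congr (_ + _).
by apply: eq_bigr => j _; rewrite (mulX_eqv _ (pderiv_eqv j h)).
Qed.

Lemma pderiv_cat j (P Q : mp) : pderiv j (P ++ Q) = pderiv j P ++ pderiv j Q.
Proof. by rewrite /pderiv filter_cat map_cat. Qed.
Lemma mulX_cat j (P Q : mp) : mulX j (P ++ Q) = mulX j P ++ mulX j Q.
Proof. by rewrite /mulX map_cat. Qed.
Lemma mulAB_cat A B (P Q : mp) : mulAB A B (P ++ Q) = mulAB A B P ++ mulAB A B Q.
Proof. by rewrite /mulAB map_cat flatten_cat. Qed.

Lemma Psi_cat A B K P Q : eqv (Psi A B K (P ++ Q)) (Psi A B K P ++ Psi A B K Q).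
Proof.
move=> s; rewrite coef_cat !coef_Psi mulAB_cat coef_cat.
rewrite (eq_bigr (fun j => coef (mulX j.+1 (pderiv j P)) s + coef (mulX j.+1 (pderiv j Q)) s)).
  by rewrite big_split /= addrACA.
by move=> j _; rewrite pderiv_cat mulX_cat coef_cat.
Qed.

Lemma Psi_neg A B K P : eqv (Psi A B K (neg P)) (neg (Psi A B K P)).
Proof.
move=> s; rewrite coef_neg !coef_Psi opprD; congr (_ + _); last first.
  rewrite -sumrN; apply: eq_bigr => j _; rewrite !coef_mulX; case: ifP; rewrite ?oppr0 // => _.
  by rewrite !coef_pderiv coef_neg scalerN.
by rewrite !coef_mulAB !coef_neg opprD mulNmx; case: ifP; rewrite ?coef_neg ?mulNmx ?oppr0.
Qed.

Lemma nth_incr s j l : nth 0%N (incr_nth s j) l = ((j == l) + nth 0%N s l)%N.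
Proof. exact: nth_incr_nth. Qed.

Lemma pderiv_mulAB A B j P s : (0 < j)%N ->
  coef (pderiv j (mulAB A B P)) s = coef (mulAB A B (pderiv j P)) s.
Proof.
move=> j0; rewrite coef_pderiv !coef_mulAB !coef_pderiv scalerDr scalemxAl.
congr (_ + _); rewrite nth_incr.
have -> : (j == 0%N) = false by case: j j0.
rewrite add0n; case: ifP => // s0; last by rewrite scaler0.
rewrite scalemxAl nth_dec; have -> : (j == 0%N) = false by case: j j0.
congr (_ *: _ *m _); apply: coef_meq; apply/meqP => l.
rewrite !(nth_dec, nth_incr).
have [->|hl] := eqVneq l 0%N; first by case: j j0.
have [->|hj] := eqVneq l j; by [].
Qed.

Lemma pderiv_mulX j l P s :
  coef (pderiv j (mulX l P)) s =
  coef (mulX l (pderiv j P)) s + (if j == l then coef P s else 0).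
Proof.
rewrite coef_pderiv !coef_mulX nth_incr.
have [<-|hjl] := eqVneq j l.
  rewrite add1n /= coef_pderiv nth_dec eqxx.
  have -> : coef P (dec (incr_nth s j) j) = coef P s.
    apply: coef_meq; apply/meqP => i; rewrite !(nth_dec, nth_incr) eqxx.
    by have [->|hl] := eqVneq i j.
  case: ifP => [sj|/negbT]; last first.
    by rewrite negbK => /eqP ->; rewrite add0r scale1r.
  have -> : coef P (incr_nth (dec s j) j) = coef P s.
    apply: coef_meq; apply/meqP => i; rewrite !(nth_dec, nth_incr).
    have [->|hl] := eqVneq i j; last by [].
    by rewrite add1n prednK // lt0n.
  rewrite prednK ?lt0n // -[X in _ = _ + X]scale1r -scalerDl.
  by rewrite -natr1.
rewrite add0n addr0; case: ifP => sl; last by rewrite scaler0.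
rewrite coef_pderiv nth_dec (negbTE hjl); congr (_ *: _).
apply: coef_meq; apply/meqP => i; rewrite !(nth_dec, nth_incr).
have [->|hi] := eqVneq i l; last by [].
by rewrite (negbTE hjl).
Qed.

Lemma pderiv_comm j l P s :
  coef (pderiv j (pderiv l P)) s = coef (pderiv l (pderiv j P)) s.
Proof.
have [->|hjl] := eqVneq j l; first by [].
rewrite !coef_pderiv !nth_incr (negbTE hjl) eq_sym (negbTE hjl) !add0n !scalerA mulrC.
congr (_ *: _); apply: coef_meq; apply/meqP => i; rewrite !nth_incr.
by rewrite addnCA.
Qed.

Lemma sum_ind (F : nat -> M) j K :
  \sum_(l <- iota 0 K) (if j == l.+1 then F l else 0) =
  if (0 < j)%N && (j <= K)%N then F j.-1 else 0.
Proof.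
elim: K => [|K IH]; first by rewrite big_nil; case: j => //= j; rewrite andbF.
rewrite -addn1 iotaD big_cat /= IH big_cons big_nil addr0 add0n.
case: j {IH} => [|j] /=; first by rewrite add0r.
rewrite addn1 eqSS.
have [->|hj] := eqVneq j K; first by rewrite ltnn leqnn add0r.
by rewrite addr0 ltnS [(j <= K)%N]leq_eqVlt (negbTE hj).
Qed.

Lemma pderiv_Psi A B K j P s : (0 < j)%N ->
  coef (pderiv j (Psi A B K P)) s =
  coef (Psi A B K (pderiv j P)) s + (if (j <= K)%N then coef (pderiv j.-1 P) s else 0).
Proof.
move=> j0; rewrite coef_pderiv !coef_Psi scalerDr -coef_pderiv scaler_sumr.
rewrite pderiv_mulAB // -addrA; congr (_ + _).
rewrite (eq_bigr (fun l => coef (mulX l.+1 (pderiv l (pderiv j P))) s +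
                           (if j == l.+1 then coef (pderiv l P) s else 0))).
  by rewrite big_split /= sum_ind j0.
move=> l _; rewrite -coef_pderiv pderiv_mulX; congr (_ + _).
by rewrite !coef_mulX; case: ifP => // _; rewrite pderiv_comm.
Qed.


Definition supp L (P : mp) := forall j, (L <= j)%N -> eqv (pderiv j P) [::].

Lemma supp_eqv L P Q : eqv P Q -> supp L P -> supp L Q.
Proof.
move=> h hP j hj; apply: eqv_trans (hP j hj).
by apply: eqv_sym; apply: pderiv_eqv.
Qed.

Lemma supp_cat L P Q : supp L P -> supp L Q -> supp L (P ++ Q).
Proof. by move=> h1 h2 j hj s; rewrite pderiv_cat coef_cat h1 // h2 // !coef_nil addr0. Qed.

Lemma supp_nil L : supp L [::].
Proof. by move=> j _ s. Qed.

Lemma Psi_nil A B K : eqv (Psi A B K [::]) [::].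
Proof.
move=> s; rewrite coef_Psi big1 => [|l _]; last first.
  by rewrite coef_mulX coef_pderiv !coef_nil scaler0; case: ifP.
rewrite addr0 coef_mulAB !coef_nil mul0mx add0r.
by case: ifP; rewrite ?mul0mx.
Qed.

Lemma supp_Psi A B K L P : supp L P -> supp L.+1 (Psi A B K P).
Proof.
move=> h j hj s; have j0 : (0 < j)%N by apply: leq_trans hj.
rewrite pderiv_Psi // coef_nil (Psi_eqv A B K (h j (ltnW hj))) Psi_nil coef_nil add0r.
have hj' : (L <= j.-1)%N by case: j hj {j0}.
by case: ifP => // _; rewrite (h _ hj') coef_nil.
Qed.

Lemma supp_pderiv L l P : supp L P -> supp L (pderiv l P).
Proof.
by move=> h j hj s; rewrite pderiv_comm coef_pderiv (h j hj) !coef_nil scaler0.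
Qed.

Lemma Psi_stab A B K L P : supp L P -> (L <= K)%N -> eqv (Psi A B K P) (Psi A B L P).
Proof.
move=> h hl s; rewrite !coef_Psi; congr (_ + _).
rewrite -(subnKC hl) iotaD big_cat /= add0n [X in _ + X]big1_seq ?addr0 // => l.
rewrite mem_iota => /andP [_ /andP [hl1 _]].
by rewrite coef_mulX; case: ifP => // _; rewrite (h l hl1) coef_nil.
Qed.

Lemma Pk_supp A B k : supp k (Pk A B k).
Proof.
elim: k => [|k IH]; first by move=> j _ s; rewrite /pderiv /= nth_nil.
exact: supp_Psi.
Qed.

Lemma Q0 A B k : eqv (Qik A B 0 k) [::].
Proof. by rewrite /Qik subn0; apply: Pk_supp. Qed.

Lemma Q_rec A B i k : (0 < i)%N -> (i <= k)%N ->
  eqv (Qik A B i k.+1) (Psi A B k (Qik A B i.-1 k) ++ Qik A B i k).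
Proof.
case: i => // i _ hik s.
rewrite /Qik coef_cat subSS.
change (Pk A B k.+1) with (Psi A B k (Pk A B k)).
rewrite pderiv_Psi ?subn_gt0 // leq_subr -subnS /=.
by [].
Qed.

Lemma Q_supp A B i k : (i <= k)%N -> supp i (Qik A B i k).
Proof.
elim: i k => [|i IH] k hik.
  exact: supp_eqv (eqv_sym (@Q0 A B k)) (@supp_nil 0).
have H : forall d, supp i.+1 (Qik A B i.+1 (d + i.+1)).
  elim => [|d IHd].
    by rewrite add0n /Qik subnn; apply: supp_pderiv; apply: Pk_supp.
  rewrite addSn; apply: supp_eqv (eqv_sym (@Q_rec A B i.+1 (d + i.+1) _ (leq_addl _ _))) _ => //.
  apply: supp_cat IHd; apply: supp_Psi; apply: IH.
  by rewrite addnS ltnW // ltnS leq_addl.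
by rewrite -(subnK hik); apply: H.
Qed.

Definition Dl (f : nat -> mp) : nat -> mp := fun k => f k.+1 ++ neg (f k).

Lemma iterDl_eqv d f g : (forall k, eqv (f k) (g k)) ->
  forall k, eqv (iter d Dl f k) (iter d Dl g k).
Proof.
move=> h; elim: d => [|d IH] k //=.
by rewrite /Dl; apply: eqv_cat (IH _) (eqv_neg (IH _)).
Qed.

Lemma iterDl_shift d f k : iter d Dl (fun k => f k.+1) k = iter d Dl f k.+1.
Proof. by elim: d k => [|d IH] k //=; rewrite /Dl !IH. Qed.

Lemma iterDl_Psi A B K d f k :
  eqv (iter d Dl (fun k => Psi A B K (f k)) k) (Psi A B K (iter d Dl f k)).
Proof.
elim: d k => [|d IH] k //=; rewrite /Dl.
apply: eqv_trans (eqv_cat (IH k.+1) (eqv_neg (IH k))) _.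
apply: eqv_trans _ (eqv_sym (Psi_cat _ _ _ _ _)).
exact: eqv_cat (eqv_refl _) (eqv_sym (Psi_neg _ _ _ _)).
Qed.

Lemma main_iter A B i : forall k, eqv (iter i Dl (fun k => Qik A B i (k + i)) k) [::].
Proof.
elim: i => [|i IH] k; first by rewrite /= addn0; apply: Q0.
rewrite iterSr.
have h1 : forall k0, eqv (Dl (fun k => Qik A B i.+1 (k + i.+1)) k0)
                         (Psi A B i (Qik A B i (k0.+1 + i))).
  move=> k0 s; rewrite /Dl coef_cat addSn.
  rewrite (Q_rec A B (i := i.+1) (k := k0 + i.+1)) ?leq_addl //.
  rewrite coef_cat coef_neg addrK /=.
  have hle : (i <= k0 + i.+1)%N by rewrite addnS ltnW // ltnS leq_addl.
  by rewrite (Psi_stab A B (Q_supp A B hle) hle) addnS.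
apply: eqv_trans (@iterDl_eqv i _ (fun k0 => Psi A B i (Qik A B i (k0.+1 + i))) h1 k) _.
apply: eqv_trans (@iterDl_Psi A B i i (fun k => Qik A B i (k.+1 + i)) k) _.
rewrite (iterDl_shift i (fun k => Qik A B i (k + i)) k).
exact: eqv_trans (Psi_eqv A B i (IH k.+1)) (@Psi_nil A B i).
Qed.

Lemma peval_cat e (P Q : mp) : peval e (P ++ Q) = peval e P + peval e Q.
Proof. by rewrite /peval big_cat. Qed.

Lemma peval_neg e (P : mp) : peval e (neg P) = - peval e P.
Proof. by rewrite /peval big_map -sumrN; apply: eq_bigr => t _; rewrite scalerN. Qed.

Lemma mono_eval_widen (e : nat -> R) s N : (size s <= N)%N ->
  mono_eval e s = \prod_(j < N) e j ^+ nth 0%N s j.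
Proof.
move=> hN; rewrite /mono_eval (big_ord_widen _ (fun j => e j ^+ nth 0%N s j) hN) big_mkcond.
apply: eq_bigr => j _; case: ifP => // /negbT; rewrite -leqNgt => hj.
by rewrite nth_default // expr0.
Qed.

Lemma mono_eval_meq (e : nat -> R) s s' : meq s s' -> mono_eval e s = mono_eval e s'.
Proof.
move=> /meqP h.
rewrite (@mono_eval_widen e s (maxn (size s) (size s'))) ?leq_maxl //.
rewrite (@mono_eval_widen e s' (maxn (size s) (size s'))) ?leq_maxr //.
by apply: eq_bigr => j _; rewrite h.
Qed.

Lemma peval_eqv0 e (P : mp) : eqv P [::] -> peval e P = 0.
Proof.
have [N] := ubnP (size P); elim: N P => [|N IH] P //.
case: P => [|t P'] hs h; first by rewrite /peval big_nil.
set P := t :: P' in h *.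
rewrite /peval (bigID (fun t' : M * mono => meq t'.2 t.2)) /=.
rewrite (eq_bigr (fun t' => mono_eval e t.2 *: t'.1)); last first.
  by move=> t' /mono_eval_meq ->.
rewrite -scaler_sumr -/(coef P t.2) h coef_nil scaler0 add0r.
rewrite -big_filter; apply: IH.
  rewrite /P /= meq_refl /= size_filter.
  by apply: leq_ltn_trans (count_size _ _) _; rewrite -ltnS.
move=> s; rewrite coef_nil /coef big_filter_cond.
case hs2: (meq s t.2).
  rewrite big_pred0 // => t'; apply/negbTE; apply/negP => /andP [h1 h2].
  by move/negP: h1; apply; apply: meq_trans h2 hs2.
transitivity (coef P s); last by rewrite h coef_nil.
apply: eq_bigl => t'.
apply/andP/idP => [[] //|h2]; split => //; apply/negP => h3.
by move/negbT: hs2; rewrite (meq_trans _ h3) // meq_sym.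
Qed.


Definition DR (g : nat -> R) : nat -> R := fun k => g k.+1 - g k.

Definition Lf (C : 'M[R]_(1, n)) (X' : M) (w : 'cV[R]_n) (X : M) : R :=
  (C *m X' *m X *m w) ord0 ord0.

Lemma iter_eval (e : nat -> R) C X' w d (f : nat -> mp) k :
  iter d DR (fun k => Lf C X' w (peval e (f k))) k = Lf C X' w (peval e (iter d Dl f k)).
Proof.
elim: d k => [|d IH] k //=.
rewrite /DR /Dl !IH peval_cat peval_neg /Lf.
by rewrite mulmxDr mulmxN mulmxDl mulNmx !mxE.
Qed.

Lemma mono_case (h : nat -> R) K : (forall k, (K <= k)%N -> h k < h k.+1) ->
  (exists K', forall k, (K' <= k)%N -> 0 < h k) \/
  (exists K', forall k, (K' <= k)%N -> h k < 0).
Proof.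
move=> H.
have mon : forall k d, (K <= k)%N -> h k <= h (d + k).
  move=> k d hk; elim: d => [|d IHd]; first by [].

  apply: le_trans IHd (ltW (H _ _)).
  exact: leq_trans hk (leq_addl _ _).
case: (classic (exists k, (K <= k)%N /\ 0 < h k)) => [[k1 [hk1 pos]]|nex].
  left; exists k1 => k hk; rewrite -(subnK hk).
  exact: lt_le_trans pos (mon _ _ hk1).
right; exists K => k hk; apply: lt_le_trans (H k hk) _.
rewrite leNgt; apply/negP => p; apply: nex; exists k.+1; split => //.
exact: leqW.
Qed.

Lemma seq_tri d (g : nat -> R) : (forall k, iter d DR g k = 0) ->
  (forall k, g k = 0) \/ (exists K, forall k, (K <= k)%N -> 0 < g k) \/
  (exists K, forall k, (K <= k)%N -> g k < 0).
Proof.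
elim: d g => [|d IH] g H; first by left.
have H' : forall k, iter d DR (DR g) k = 0 by move=> k; rewrite -iterSr.
case: (IH _ H') => [H0|[[K HK]|[K HK]]].
- have c : forall k, g k = g 0%N.
    elim => // k IHk; move: (H0 k); rewrite /DR => /eqP; rewrite subr_eq0 => /eqP ->.
    exact: IHk.
  case: (ltgtP (g 0%N) 0) => hg.
  + by right; right; exists 0%N => k _; rewrite c.
  + by right; left; exists 0%N => k _; rewrite c.
  + by left => k; rewrite c.
- right; apply: mono_case (K) _ => k hk.
  by move: (HK k hk); rewrite /DR subr_gt0.
- case: (@mono_case (fun k => - g k) K).
  + by move=> k hk; move: (HK k hk); rewrite /DR subr_lt0 ltrN2.
  + by case=> K' HK'; right; right; exists K' => k hk; rewrite -oppr_gt0; apply: HK'.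
  + by case=> K' HK'; right; left; exists K' => k hk; rewrite -oppr_lt0; apply: HK'.
Qed.

Lemma mx11_eq0 (X : 'M[R]_(1, 1)) : (X == 0) = (X ord0 ord0 == 0).
Proof.
apply/eqP/eqP => [->|h]; first by rewrite mxE.
by apply/matrixP => a b; rewrite !ord1 h mxE.
Qed.

End Work.

Theorem corollary3 (R : realType) (n : nat) (hn : (1 <= n)%N)
  (A B : 'M[R]_n) (C : 'M[R]_(1, n))
  (i m : nat) (hi : (1 <= i)%N) (v : 'rV[R]_i) (w0 : 'cV[R]_n) :
  (exists k0 : nat, (i <= k0)%N /\
     forall k : nat, (k0 <= k)%N ->
       C *m mxpow B m *m peval (env_of v) (Qik A B i k) *m w0 != 0)
  \/
  (forall k : nat, (i <= k)%N ->
       C *m mxpow B m *m peval (env_of v) (Qik A B i k) *m w0 = 0).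
Proof.
set e := env_of v.
set f := fun k => Lf C (mxpow B m) w0 (peval e (Qik A B i k)).
have Hit : forall k, iter i (@DR R) (fun k => f (k + i)) k = 0.
  move=> k; rewrite /f (@iter_eval R n e C (mxpow B m) w0 i (fun k => Qik A B i (k + i)) k).
  by rewrite (peval_eqv0 e (main_iter A B i k)) /Lf mulmx0 mul0mx mxE.
have hk : forall k, (i <= k)%N -> f k = f ((k - i) + i)%N by move=> k hk; rewrite subnK.
case: (seq_tri Hit) => [H0|[[K HK]|[K HK]]].
- right => k hki; apply/eqP; rewrite mx11_eq0; apply/eqP.
  by move: (H0 (k - i)%N); rewrite -hk.
- left; exists (K + i); split; first exact: leq_addl.
  move=> k hKk; have hki : (i <= k)%N := leq_trans (leq_addl _ _) hKk.
  rewrite mx11_eq0; move: (HK (k - i)%N); rewrite -hk // => h.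
  by rewrite gt_eqF // h // -(leq_add2r i) subnK.
- left; exists (K + i); split; first exact: leq_addl.
  move=> k hKk; have hki : (i <= k)%N := leq_trans (leq_addl _ _) hKk.
  rewrite mx11_eq0; move: (HK (k - i)%N); rewrite -hk // => h.
  by rewrite lt_eqF // h // -(leq_add2r i) subnK.
Qed.
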